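(* Let $V$ be a finite-dimensional real vector space of even dimension, $\omega_0$ a non-degenerate alternating two-form on $V$, and $\omega_1$ any alternating two-form on $V$. If the set $\mathcal{J}_\tau(\omega_0,\omega_1)$ of complex structures $J$ on $V$ which are tamed by $\omega_0$ and tamed by $\omega_1$ is non-empty, then it is contractible.
   Context: $J$ is tamed by $\omega_0$ if $\omega_0(v,Jv)>0$ for all $v\ne0$. $J$ is tamed by $\omega_1$ if $\omega_1(v,Jv)\ge 0$ for all $v\in V$, with equality if and only if $v\in\ker\omega_1=\{v:\iota_v\omega_1=0\}$. The set is topologized as a subset of $\mathrm{End}(V)$. *)

(* Defs.v *)
From HB Require Import structures.
From mathcomp Require Import all_boot all_order all_algebra.
From mathcomp Require Import all_classical all_reals all_analysis.
Set Implicit Arguments. Unset Strict Implicit. Unset Printing Implicit Defensive.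
Import Order.TTheory GRing.Theory Num.Theory.
Import numFieldNormedType.Exports.
Local Open Scope classical_set_scope.
Local Open Scope ring_scope.

(* V = 'rV[R]_n (row vectors); an endomorphism of V is a matrix J acting by
   v |-> v *m J; a (real) bilinear form on V is given by its Gram matrix W via
   form W u v = u W v^T. *)
Definition form (R : realType) (n : nat) (W : 'M[R]_n) (u v : 'rV[R]_n) : R :=
  (u *m W *m v^T) ord0 ord0.

Definition alternating_form (R : realType) (n : nat) (W : 'M[R]_n) : Prop :=
  forall v : 'rV[R]_n, form W v v = 0.

Definition nondegenerate_form (R : realType) (n : nat) (W : 'M[R]_n) : Prop :=
  forall u : 'rV[R]_n, (forall v, form W u v = 0) -> u = 0.

Definition kerform (R : realType) (n : nat) (W : 'M[R]_n) : set 'rV[R]_n :=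
  [set u | forall v, form W u v = 0].

Definition complex_structure (R : realType) (n : nat) (J : 'M[R]_n) : Prop :=
  J *m J = - 1%:M.

Definition tamed_nondeg (R : realType) (n : nat) (W : 'M[R]_n) (J : 'M[R]_n) : Prop :=
  forall v : 'rV[R]_n, v != 0 -> 0 < form W v (v *m J).

Definition tamed_deg (R : realType) (n : nat) (W : 'M[R]_n) (J : 'M[R]_n) : Prop :=
  forall v : 'rV[R]_n,
    0 <= form W v (v *m J) /\ (form W v (v *m J) = 0 <-> kerform W v).

Definition Jtau (R : realType) (n : nat) (W0 W1 : 'M[R]_n) : set 'M[R]_n :=
  [set J | complex_structure J /\ tamed_nondeg W0 J /\ tamed_deg W1 J].

Definition contractible (R : realType) (T : topologicalType) (A : set T) : Prop :=
  exists2 x0 : T, A x0 &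
  exists (H : (R * T)%type -> T),
    [/\ {within [set` `[0%R, 1%R]] `*` A, continuous H},
        (forall t x, [set` `[0%R, 1%R]] t -> A x -> A (H (t, x))),
        (forall x, A x -> H (0%R, x) = x) &
        (forall x, A x -> H (1%R, x) = x0)].

(* Main.v *)
Require Import Defs.
From HB Require Import structures.
From mathcomp Require Import all_boot all_order all_algebra.
From mathcomp Require Import all_classical all_reals all_analysis.
From mathcomp Require Import ring lra.
Import Order.TTheory GRing.Theory Num.Theory.
Import numFieldNormedType.Exports.
Local Open Scope classical_set_scope.
Local Open Scope ring_scope.
Section Alg.
Variables (R : realType) (n : nat).
Implicit Types (W J K : 'M[R]_n) (u v w : 'rV[R]_n).

Lemma formDl W u v w : Defs.form W (u + v) w = Defs.form W u w + Defs.form W v w.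
Proof. by rewrite /Defs.form !mulmxDl mxE. Qed.
Lemma formDr W u v w : Defs.form W u (v + w) = Defs.form W u v + Defs.form W u w.
Proof. by rewrite /Defs.form linearD /= mulmxDr mxE. Qed.
Lemma formZl W (k : R) u v : Defs.form W (k *: u) v = k * Defs.form W u v.
Proof. by rewrite /Defs.form -!scalemxAl mxE. Qed.
Lemma formZr W (k : R) u v : Defs.form W u (k *: v) = k * Defs.form W u v.
Proof. by rewrite /Defs.form linearZ /= -scalemxAr mxE. Qed.
Lemma formNl W u v : Defs.form W (- u) v = - Defs.form W u v.
Proof. by rewrite -scaleN1r formZl mulN1r. Qed.
Lemma formNr W u v : Defs.form W u (- v) = - Defs.form W u v.
Proof. by rewrite -scaleN1r formZr mulN1r. Qed.
Lemma form0l W v : Defs.form W 0 v = 0.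
Proof. by rewrite /Defs.form !mul0mx mxE. Qed.
Lemma form0r W v : Defs.form W v 0 = 0.
Proof. by rewrite /Defs.form trmx0 mulmx0 mxE. Qed.

Lemma form_anti W u v : alternating_form W -> Defs.form W u v = - Defs.form W v u.
Proof.
move=> hW; have := hW (u + v).
rewrite formDl !formDr hW hW add0r addr0 => /eqP; rewrite addr_eq0 => /eqP //.
Qed.

Definition Mt J J0 (t : R) : 'M[R]_n := (2 - t)%:M - t *: (J *m J0).

Lemma Mt_v J J0 t w : w *m Mt J J0 t = (2*(1-t)) *: w + t *: (w - w *m J *m J0).
Proof.
rewrite /Mt mulmxBr mul_mx_scalar -scalemxAr mulmxA scalerBr addrA -scalerDl.
by congr (_ *: _ - _); ring.
Qed.

Lemma Mt_v' J J0 t w : J *m J = - 1%:M -> J0 *m J0 = - 1%:M ->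
  w *m J *m Mt J J0 t = (2*(1-t)) *: (w *m J) + t *: ((w - w *m J *m J0) *m J0).
Proof.
move=> hJ hJ0; rewrite Mt_v; congr (_ + _); congr (_ *: _).
rewrite mulmxBl -(mulmxA w J J) hJ -(mulmxA (w *m J) J0 J0) hJ0 !mulmxN !mulmx1 mulNmx !opprK.
by rewrite addrC.
Qed.

Lemma key_id W J J0 t w : alternating_form W -> J *m J = - 1%:M -> J0 *m J0 = - 1%:M ->
  Defs.form W (w *m Mt J J0 t) (w *m J *m Mt J J0 t) =
  (2*(1-t))^+2 * Defs.form W w (w *m J) + t^+2 * Defs.form W (w - w *m J *m J0) ((w - w *m J *m J0) *m J0)
  + (2*(1-t)) * t * (2 * Defs.form W w (w *m J) + Defs.form W w (w *m J0) + Defs.form W (w *m J) (w *m J *m J0)).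
Proof.
move=> hW hJ hJ0.
rewrite Mt_v' // Mt_v.
have hU : (w - w *m J *m J0) *m J0 = w *m J0 + w *m J by rewrite mulmxBl -(mulmxA (w *m J) J0 J0) hJ0 mulmxN mulmx1 opprK.
rewrite hU.
rewrite ?(formDl, formDr, formNl, formNr, formZl, formZr).
rewrite (form_anti _ (w *m J *m J0) (w *m J) hW).
ring.
Qed.
Lemma mulmx_neq0_J J w : J *m J = - 1%:M -> w != 0 -> w *m J != 0.
Proof.
move=> hJ; apply: contra => /eqP h; apply/eqP.
by have := congr1 (mulmx^~ J) h; rewrite -mulmxA hJ mulmxN mulmx1 mul0mx => /eqP; rewrite oppr_eq0 => /eqP.
Qed.

Lemma value_pos W J J0 t w : alternating_form W -> J *m J = - 1%:M -> J0 *m J0 = - 1%:M ->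
  tamed_nondeg W J -> tamed_nondeg W J0 -> 0 <= t <= 1 -> w != 0 ->
  0 < Defs.form W (w *m Mt J J0 t) (w *m J *m Mt J J0 t).
Proof.
move=> hW hJ hJ0 tJ tJ0 /andP[t0 t1] w0.
have ge0 : forall u, 0 <= Defs.form W u (u *m J0).
  by move=> u; have [->|u0] := eqVneq u 0; [rewrite form0l | exact/ltW/tJ0].
rewrite key_id //.
set U := w - w *m J *m J0.
have hU : U *m J0 = w *m J0 + w *m J by rewrite mulmxBl -(mulmxA (w *m J) J0 J0) hJ0 mulmxN mulmx1 opprK.
have B0 := tJ w w0.
have C0 := tJ0 w w0.
have D0 := ge0 (w *m J).
have U0 : U != 0.
  apply/eqP => U0; have := congr1 (fun u => Defs.form W w u) hU.
  rewrite U0 mul0mx form0r formDr /=. lra.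
have A0 := tJ0 U U0.
have X3 : 0 <= 2 * (1 - t) * t * (2 * Defs.form W w (w *m J) + Defs.form W w (w *m J0) + Defs.form W (w *m J) (w *m J *m J0)).
  by apply: mulr_ge0; [apply: mulr_ge0; lra|lra].
suff : 0 < (2 * (1 - t)) ^+ 2 * Defs.form W w (w *m J) + t ^+ 2 * Defs.form W U (U *m J0) by lra.
have [->|tp] := eqVneq t 0.
  by rewrite [0 ^+ 2]expr2 !mul0r addr0; apply: mulr_gt0 => //; rewrite exprn_gt0 //; lra.
have tp' : 0 < t by rewrite lt_neqAle eq_sym tp.
have P2 : 0 < t ^+ 2 * Defs.form W U (U *m J0) by apply: mulr_gt0 => //; rewrite exprn_gt0.
have P1 : 0 <= (2 * (1 - t)) ^+ 2 * Defs.form W w (w *m J).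
  by apply: mulr_ge0; [apply: exprn_ge0; lra | exact: ltW].
lra.
Qed.

Lemma value_deg W J J0 t w : alternating_form W -> J *m J = - 1%:M -> J0 *m J0 = - 1%:M ->
  tamed_deg W J -> tamed_deg W J0 -> 0 <= t <= 1 ->
  0 <= Defs.form W (w *m Mt J J0 t) (w *m J *m Mt J J0 t) /\
  (Defs.form W (w *m Mt J J0 t) (w *m J *m Mt J J0 t) = 0 -> kerform W (w *m Mt J J0 t)).
Proof.
move=> hW hJ hJ0 tJ tJ0 /andP[t0 t1].
rewrite key_id //.
set U := w - w *m J *m J0.
have [B0 hB] := tJ w.
have [C0 _] := tJ0 w.
have [D0 _] := tJ0 (w *m J).
have [A0 hA] := tJ0 U.
have a0 : 0 <= 2 * (1 - t) by lra.
have X1 : 0 <= (2 * (1 - t)) ^+ 2 * Defs.form W w (w *m J) by apply: mulr_ge0 => //; apply: exprn_ge0.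
have X2 : 0 <= t ^+ 2 * Defs.form W U (U *m J0) by apply: mulr_ge0 => //; apply: exprn_ge0.
have X3 : 0 <= 2 * (1 - t) * t * (2 * Defs.form W w (w *m J) + Defs.form W w (w *m J0) + Defs.form W (w *m J) (w *m J *m J0)).
  by apply: mulr_ge0; [apply: mulr_ge0|lra].
split; first lra.
move=> h0 x.
have E1 : (2 * (1 - t)) ^+ 2 * Defs.form W w (w *m J) = 0 by lra.
have E2 : t ^+ 2 * Defs.form W U (U *m J0) = 0 by lra.
rewrite Mt_v -/U formDl !formZl.
have -> : 2 * (1 - t) * Defs.form W w x = 0.
  have [->|a1] := eqVneq (2 * (1 - t)) 0; first by rewrite mul0r.
  move: E1 => /eqP; rewrite mulf_eq0 expf_eq0 (negbTE a1) andbF /= => /eqP E1.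
  by rewrite ((hB.1 E1) x) mulr0.
have [->|t1'] := eqVneq t 0; first by rewrite mul0r addr0.
move: E2 => /eqP; rewrite mulf_eq0 expf_eq0 (negbTE t1') andbF /= => /eqP E2.
by rewrite ((hA.1 E2) x) mulr0 addr0.
Qed.
Lemma Mt_unit W J J0 t : alternating_form W -> J *m J = - 1%:M -> J0 *m J0 = - 1%:M ->
  tamed_nondeg W J -> tamed_nondeg W J0 -> 0 <= t <= 1 -> Mt J J0 t \in unitmx.
Proof.
move=> hW hJ hJ0 tJ tJ0 ht.
rewrite -row_free_unit -kermx_eq0; apply/negPn/negP => hK.
have [i hi] : exists i, row i (kermx (Mt J J0 t)) != 0.
  apply/not_existsP => hn; move/negP: hK; apply; apply/eqP/row_matrixP => i.
  by rewrite row0; apply/eqP; apply/negPn/negP => h; apply: (hn i).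
have := value_pos _ _ _ _ _ hW hJ hJ0 tJ tJ0 ht hi.
by rewrite -row_mul mulmx_ker row0 form0l ltxx.
Qed.

Definition Ht J J0 t := invmx (Mt J J0 t) *m J *m Mt J J0 t.

Lemma Ht_in W0 W1 J J0 t : alternating_form W0 -> alternating_form W1 ->
  Jtau W0 W1 J -> Jtau W0 W1 J0 -> 0 <= t <= 1 -> Jtau W0 W1 (Ht J J0 t).
Proof.
move=> h0 h1 [hJ [tJ dJ]] [hJ0 [tJ0 dJ0]] ht.
have hu := Mt_unit _ _ _ t h0 hJ hJ0 tJ tJ0 ht.
have hv : forall v, v = (v *m invmx (Mt J J0 t)) *m Mt J J0 t.
  by move=> v; rewrite -mulmxA mulVmx // mulmx1.
have hvH : forall v, v *m Ht J J0 t = (v *m invmx (Mt J J0 t)) *m J *m Mt J J0 t.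
  by move=> v; rewrite /Ht !mulmxA.
split; [|split].
- rewrite /complex_structure /Ht.
  rewrite -!mulmxA [Mt J J0 t *m _]mulmxA mulmxV // mul1mx.
  by rewrite !mulmxA -(mulmxA _ J J) hJ mulmxN mulmx1 mulNmx mulVmx.
- move=> v v0; rewrite hvH {1}(hv v).
  apply: value_pos => //.
  by apply: contraNneq v0 => h; rewrite (hv v) h mul0mx.
- move=> v; rewrite hvH {1 3}(hv v).
  have [X Y] := value_deg _ _ _ _ (v *m invmx (Mt J J0 t)) h1 hJ hJ0 dJ dJ0 ht.
  split => //; split => [hk|hk].
    by have := Y hk; rewrite -hv.
  by rewrite -(hv v); apply: hk.
Qed.
Lemma Ht0 J J0 : Ht J J0 0 = J.
Proof.
have hM : Mt J J0 0 = 2%:M by rewrite /Mt scale0r subr0 subr0.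
have hu : (2%:M : 'M[R]_n) \in unitmx.
  by rewrite unitmxE det_scalar unitrX // unitfE; apply: lt0r_neq0; lra.
by rewrite /Ht hM -mulmxA scalar_mxC mulmxA mulVmx // mul1mx.
Qed.

Lemma Ht1 J J0 : J *m J = - 1%:M -> J0 *m J0 = - 1%:M -> Mt J J0 1 \in unitmx ->
  Ht J J0 1 = J0.
Proof.
move=> hJ hJ0 hu.
have e : J *m Mt J J0 1 = Mt J J0 1 *m J0.
  rewrite /Mt scale1r mulmxBr mulmxBl mul_mx_scalar mul_scalar_mx mulmxA hJ.
  rewrite -mulmxA hJ0 mulNmx mul1mx mulmxN mulmx1.
  have -> : (2 - 1 : R) = 1 by lra.
  by rewrite !scale1r !opprK addrC.
by rewrite /Ht -mulmxA e mulmxA mulVmx // mul1mx.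
Qed.
End Alg.
Section Cont.
Variables (R : realType) (n : nat) (z : (R * 'M[R]_n)%type).
Local Notation T := (R * 'M[R]_n)%type.

Definition sc (f : T -> R) := f x @[x --> z] --> f z.
Definition mc m p (G : T -> 'M[R]_(m, p)) := forall i j, sc (fun x => G x i j).
Arguments mc {m p}.

Lemma sc_cst (c : R) : sc (fun=> c).
Proof. exact: cvg_cst. Qed.
Lemma sc_add f g : sc f -> sc g -> sc (fun x => f x + g x).
Proof. by move=> hf hg; apply: cvgD. Qed.
Lemma sc_mul f g : sc f -> sc g -> sc (fun x => f x * g x).
Proof. by move=> hf hg; apply: cvgM. Qed.
Lemma sc_opp f : sc f -> sc (fun x => - f x).
Proof. by move=> hf; apply: cvgN. Qed.
Lemma sc_inv f : f z != 0 -> sc f -> sc (fun x => (f x)^-1).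
Proof. by move=> h hf; apply: cvgV. Qed.
Lemma sc_fst : sc (fun x => x.1).
Proof. exact: cvg_fst. Qed.
Lemma sc_entry i j : sc (fun x => x.2 i j).
Proof.
rewrite /sc; apply: (@cvg_comp _ _ _ snd (fun M : 'M[R]_n => M i j)).
  exact: cvg_snd.
exact: coord_continuous.
Qed.

Lemma sc_big (I : Type) (op : R -> R -> R) (idx : R) (r : seq I) (P : pred I) (F : I -> T -> R) :
  (forall f g, sc f -> sc g -> sc (fun x => op (f x) (g x))) ->
  (forall i, sc (F i)) -> sc (fun x => \big[op/idx]_(i <- r | P i) F i x).
Proof.
move=> hop hF; elim: r => [|a r IH].
  by under eq_fun do rewrite big_nil; exact: sc_cst.
under eq_fun do rewrite big_cons.
case: (P a) => //; exact: hop.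
Qed.
Lemma mc_cst m p (A : 'M[R]_(m, p)) : mc (fun=> A).
Proof. by move=> i j; apply: sc_cst. Qed.
Lemma mc_snd : mc (fun x => x.2).
Proof. by move=> i j; apply: sc_entry. Qed.
Lemma mc_add m p (F G : T -> 'M[R]_(m, p)) : mc F -> mc G -> mc (fun x => F x + G x).
Proof. by move=> hF hG i j; under eq_fun do rewrite mxE; apply: sc_add. Qed.
Lemma mc_opp m p (F : T -> 'M[R]_(m, p)) : mc F -> mc (fun x => - F x).
Proof. by move=> hF i j; under eq_fun do rewrite mxE; apply: sc_opp. Qed.
Lemma mc_scale m p (a : T -> R) (F : T -> 'M[R]_(m, p)) : sc a -> mc F -> mc (fun x => a x *: F x).
Proof. by move=> ha hF i j; under eq_fun do rewrite mxE; apply: sc_mul. Qed.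
Lemma mc_scalar (a : T -> R) : sc a -> mc (fun x => (a x)%:M : 'M[R]_n).
Proof.
move=> ha i j; under eq_fun do rewrite mxE.
case: (i == j).
  by under eq_fun do rewrite mulr1n.
by under eq_fun do rewrite mulr0n; apply: sc_cst.
Qed.
Lemma mc_mul m p q (F : T -> 'M[R]_(m, p)) (G : T -> 'M[R]_(p, q)) : mc F -> mc G -> mc (fun x => F x *m G x).
Proof.
move=> hF hG i j; under eq_fun do rewrite mxE.
apply: sc_big; first exact: sc_add.
by move=> k; apply: sc_mul.
Qed.
Lemma sc_det m (F : T -> 'M[R]_m) : mc F -> sc (fun x => \det (F x)).
Proof.
move=> hF; rewrite /determinant.
apply: sc_big; first exact: sc_add.
move=> s; apply: sc_mul; first exact: sc_cst.
apply: sc_big; first exact: sc_mul.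
by move=> k; apply: hF.
Qed.
Lemma mc_adj m (F : T -> 'M[R]_m) : mc F -> mc (fun x => \adj (F x)).
Proof.
move=> hF i j; under eq_fun do rewrite mxE /cofactor.
apply: sc_mul; first exact: sc_cst.
apply: sc_det => k l; under eq_fun do rewrite !mxE.
exact: hF.
Qed.
Lemma mc_inv m (F : T -> 'M[R]_m) : mc F -> \det (F z) != 0 -> mc (fun x => invmx (F x)).
Proof.
move=> hF hd.
have hG : mc (fun x => (\det (F x))^-1 *: \adj (F x)).
  by apply: mc_scale; [apply: sc_inv => //; apply: sc_det | apply: mc_adj].
have hnear : \forall x \near z, \det (F x) != 0 := cvgr_neq0 _ (sc_det _ _ hF) hd.
move=> i j; rewrite /sc.
have -> : invmx (F z) i j = ((\det (F z))^-1 *: \adj (F z)) i j.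
  by rewrite /invmx unitmxE unitfE hd.
apply: cvg_trans (hG i j).
apply: near_eq_cvg; near=> x.
have hx : \det (F x) != 0 by near: x; exact: hnear.
by rewrite /invmx unitmxE unitfE hx.
Unshelve. all: by end_near.
Qed.

Lemma mc_cvg m p (G : T -> 'M[R]_(m, p)) : mc G -> G x @[x --> z] --> G z.
Proof.
move=> hG; apply/cvg_mx_entourageP => A entA.
have H : forall i j, \forall x \near z, (G z i j, G x i j) \in A.
  move=> i j; have h := (cvg_entourageP _ (G z i j)).1 (hG i j) A entA.
  near=> x; rewrite inE; near: x; exact: h.
change (\forall x \near z, forall i j, (G z i j, G x i j) \in A).
have H2 : forall i, \forall x \near z, forall j, (G z i j, G x i j) \in A.
  have FF : Filter (nbhs z) by exact: nbhs_filter.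
  by move=> i; apply: (@filter_forall _ _ _ _ FF); exact: H i.
exact: filter_forall H2.
Unshelve. all: by end_near.
Qed.
End Cont.
Arguments Mt {R n}. Arguments Ht {R n}. Arguments Mt_unit {R n}. Arguments Ht_in {R n}.
Arguments Ht0 {R n}. Arguments Ht1 {R n}.
Arguments sc {R n}. Arguments mc {R n z m p}.
Arguments mc_cvg {R n z m p}. Arguments mc_add {R n z m p}. Arguments mc_mul {R n z m p q}.
Arguments mc_inv {R n z m}. Arguments mc_scalar {R n z}. Arguments mc_opp {R n z m p}.
Arguments mc_scale {R n z m p}. Arguments mc_snd {R n z}. Arguments mc_cst {R n z m p}.
Arguments sc_add {R n z}. Arguments sc_cst {R n z}. Arguments sc_opp {R n z}. Arguments sc_fst {R n z}.

Theorem lemmaA1 (R : realType) (n : nat) (W0 W1 : 'M[R]_n) :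
  ~~ odd n ->
  alternating_form W0 -> nondegenerate_form W0 ->
  alternating_form W1 ->
  Jtau W0 W1 !=set0 ->
  contractible R (Jtau W0 W1).
Proof.
move=> _ h0 _ h1 [J0 hJ0].
exists J0 => //.
exists (fun z => Ht z.2 J0 z.1).
have itv01 : forall t : R, [set` `[0%R, 1%R]] t -> 0 <= t <= 1.
  by move=> t /=; rewrite in_itv.
have [hJ0c [tJ0 dJ0]] := hJ0.
split.
- apply: continuous_in_subspaceT => z; rewrite inE => -[/itv01 zt zJ].
  have [hJ [tJ dJ]] := zJ.
  apply: mc_cvg.
  have hM : mc (z:=z) (fun x : R * 'M[R]_n => Mt x.2 J0 x.1).
    rewrite /Mt; apply: mc_add.
      by apply: mc_scalar; apply: sc_add; [apply: sc_cst | apply: sc_opp; apply: sc_fst].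
    apply: mc_opp; apply: mc_scale; first exact: sc_fst.
    by apply: mc_mul; [apply: mc_snd | apply: mc_cst].
  rewrite /Ht; apply: mc_mul => //; apply: mc_mul; last exact: mc_snd.
  apply: mc_inv => //.
  by rewrite -unitfE -unitmxE; apply: (Mt_unit _ _ _ _ h0).
- by move=> t x /itv01 ht hx; apply: Ht_in.
- by move=> x _; rewrite /= Ht0.
- move=> x [hx [tx dx]]; rewrite /= Ht1 //.
  by apply: (Mt_unit _ _ _ _ h0) => //; rewrite ler01 lexx.
Qed.
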